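(* Let $r_0,r_1,r_2\ge 1$ and $L=\mathfrak{g}(r_0,r_1,r_2)$. If $r_1\ge r_0$ or $r_1\ge r_2$, then $b(L)=r_0r_2$.
   Context: All Lie algebras are over an algebraically closed field $\mathbf{k}$ of characteristic zero. $\mathcal{P}(r_0,r_1,r_2)$ is the poset on $\{b_1,\dots,b_{r_0},m_1,\dots,m_{r_1},t_1,\dots,t_{r_2}\}$ whose strict relations are exactly $b_i\prec m_j$, $m_j\prec t_k$ and $b_i\prec t_k$ for all $i,j,k$ (i.e. $b_1,\dots,b_{r_0}\prec m_1,\dots,m_{r_1}\prec t_1,\dots,t_{r_2}$). $\mathfrak{g}(r_0,r_1,r_2)$ denotes the nilpotent Lie poset algebra $\mathfrak{g}^{\prec}(\mathcal{P}(r_0,r_1,r_2))$: the Lie algebra under the commutator bracket spanned by matrix units $E_{p,q}$ (rows/columns indexed by the poset) with $p\prec q$. The breadth of a Lie algebra $L$ is $b(L)=\max_{x\in L}\operatorname{rank}(\mathrm{ad}_x)$, where $\mathrm{ad}_x=[x,-]$. *)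

(* Defs.v *)
From HB Require Import structures.
From mathcomp Require Import all_boot all_order all_algebra.
Unset Printing Implicit Defensive.
Import GRing.Theory.
Local Open Scope ring_scope.

(* The poset P(r0,r1,r2) has ground set 'I_(r0+r1+r2):
   indices i < r0 are b_1..b_{r0}, r0 <= i < r0+r1 are m_1..m_{r1},
   and the rest are t_1..t_{r2}. *)
Definition plevel (r0 r1 r2 : nat) (i : 'I_(r0 + r1 + r2)) : nat :=
  if (i < r0)%N then 0%N else if (i < r0 + r1)%N then 1%N else 2%N.

Definition pprec (r0 r1 r2 : nat) (p q : 'I_(r0 + r1 + r2)) : bool :=
  (plevel r0 r1 r2 p < plevel r0 r1 r2 q)%N.

(* membership in g(r0,r1,r2) = span of E_{p,q} with p < q *)
Definition in_gP (F : fieldType) (r0 r1 r2 : nat)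
  (x : 'M[F]_(r0 + r1 + r2)) : Prop :=
  forall p q, ~~ pprec r0 r1 r2 p q -> x p q = 0.

Definition projP (F : fieldType) (r0 r1 r2 : nat)
  (E : 'M[F]_(r0 + r1 + r2)) : 'M[F]_(r0 + r1 + r2) :=
  \matrix_(p, q) (if pprec r0 r1 r2 p q then E p q else 0).

Definition lie_br (F : fieldType) n (x y : 'M[F]_n) : 'M[F]_n :=
  x *m y - y *m x.

(* Matrix whose rows are mxvec [x, projP E_k] where E_k runs over all matrix
   units; its row space is exactly the image of ad_x restricted to g. *)
Definition ad_img (F : fieldType) (r0 r1 r2 : nat)
  (x : 'M[F]_(r0 + r1 + r2)) :
  'M[F]_((r0 + r1 + r2) * (r0 + r1 + r2), (r0 + r1 + r2) * (r0 + r1 + r2)) :=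
  \matrix_(k < (r0 + r1 + r2) * (r0 + r1 + r2))
     mxvec (lie_br F _ x (projP F r0 r1 r2 (vec_mx (delta_mx 0 k)))).

Definition rank_ad (F : fieldType) (r0 r1 r2 : nat)
  (x : 'M[F]_(r0 + r1 + r2)) : nat := \rank (ad_img F r0 r1 r2 x).

Definition breadth_is (F : fieldType) (r0 r1 r2 : nat) (b : nat) : Prop :=
  (exists x : 'M[F]_(r0 + r1 + r2), in_gP F r0 r1 r2 x /\ rank_ad F r0 r1 r2 x = b) /\
  (forall x : 'M[F]_(r0 + r1 + r2), in_gP F r0 r1 r2 x -> (rank_ad F r0 r1 r2 x <= b)%N).

(* Main.v *)
Require Import Defs.
From mathcomp Require Import all_boot all_order all_algebra.
From mathcomp Require Import zify.
Import GRing.Theory.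
Local Open Scope ring_scope.

Section S.
Variable F : fieldType.
Variables r0 r1 r2 : nat.
Local Notation n := (r0 + r1 + r2)%N.
Local Notation lev := (plevel r0 r1 r2).

Definition bI (i : 'I_r0) : 'I_n := lshift r2 (lshift r1 i).
Definition mI (j : 'I_r1) : 'I_n := lshift r2 (rshift r0 j).
Definition tI (k : 'I_r2) : 'I_n := rshift (r0 + r1) k.

Lemma lev_b i : lev (bI i) = 0%N.
Proof. by rewrite /plevel /= ltn_ord. Qed.
Lemma lev_m j : lev (mI j) = 1%N.
Proof. rewrite /plevel /=; have := ltn_ord j; repeat case: ifP => ?; lia. Qed.
Lemma lev_t k : lev (tI k) = 2%N.
Proof. rewrite /plevel /=; have := ltn_ord k; repeat case: ifP => ?; lia. Qed.
Lemma lev_le2 p : (lev p <= 2)%N.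
Proof. by rewrite /plevel; repeat case: ifP. Qed.

Variant idx_spec : 'I_n -> Type :=
 | IB i : idx_spec (bI i) | IM j : idx_spec (mI j) | IT k : idx_spec (tI k).
Lemma idxP p : idx_spec p.
Proof.
case: (split_ordP p) => [a ->|k ->]; last exact: IT.
by case: (split_ordP a) => [i ->|j ->]; [exact: IB|exact: IM].
Qed.

Lemma bI_inj : injective bI.
Proof. by move=> i j /lshift_inj/lshift_inj. Qed.
Lemma mI_inj : injective mI.
Proof. by move=> i j /lshift_inj/rshift_inj. Qed.
Lemma tI_inj : injective tI.
Proof. exact: rshift_inj. Qed.

Lemma mul_g_zero (x y : 'M[F]_n) p q : in_gP F r0 r1 r2 x -> in_gP F r0 r1 r2 y ->
  ~~ ((lev p == 0%N) && (lev q == 2%N)) -> (x *m y) p q = 0.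
Proof.
move=> hx hy hpq; rewrite mxE big1 // => l _.
case: (boolP (pprec r0 r1 r2 p l)) => [hpl|hpl]; last by rewrite hx ?mul0r.
case: (boolP (pprec r0 r1 r2 l q)) => [hlq|hlq]; last by rewrite hy ?mulr0.
move: hpq hpl hlq; rewrite /pprec; have := lev_le2 q; lia.
Qed.

Lemma br_zero (x y : 'M[F]_n) p q : in_gP F r0 r1 r2 x -> in_gP F r0 r1 r2 y ->
  ~~ ((lev p == 0%N) && (lev q == 2%N)) -> (lie_br F _ x y) p q = 0.
Proof.
move=> hx hy hpq; have := mul_g_zero _ _ _ _ hx hy hpq; have := mul_g_zero _ _ _ _ hy hx hpq.
by rewrite /lie_br !mxE => -> ->; rewrite subr0.
Qed.

Lemma projP_g E : in_gP F r0 r1 r2 (projP F r0 r1 r2 E).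
Proof. by move=> p q h; rewrite mxE (negbTE h). Qed.

Definition pr (c : 'I_(r0 * r2)) : 'I_r0 * 'I_r2 :=
  enum_val (cast_ord (esym (mxvec_cast r0 r2)) c).
Lemma prK i j : pr (mxvec_index i j) = (i, j).
Proof. by rewrite /pr /mxvec_index cast_ordK enum_rankK. Qed.

Lemma mxvec_index_inj m k (i i' : 'I_m) (j j' : 'I_k) :
  mxvec_index i j = mxvec_index i' j' -> i = i' /\ j = j'.
Proof. by move/cast_ord_inj/enum_rank_inj => [-> ->]. Qed.

Definition gD (c : 'I_(r0 * r2)) : 'I_(n * n) := mxvec_index (bI (pr c).1) (tI (pr c).2).
Lemma gD_inj : injective gD.
Proof.
move=> c c'; case/mxvec_indexP: c => i j; case/mxvec_indexP: c' => i' j'.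
rewrite /gD !prK /= => /mxvec_index_inj [/bI_inj -> /tI_inj ->] //.
Qed.

Definition Dl : 'M[F]_(r0 * r2, n * n) := \matrix_c (delta_mx 0 (gD c)).

Lemma Dl_rank : \rank Dl = (r0 * r2)%N.
Proof.
apply/eqP; rewrite eqn_leq rank_leq_row /=.
have E : Dl *m Dl^T = 1%:M.
  apply/matrixP => c c'; rewrite !mxE (bigD1 (gD c)) //= big1.
    by rewrite !mxE !eqxx /= mul1r addr0 (inj_eq gD_inj) eq_sym.
  by move=> l /negbTE hl; rewrite !mxE hl mul0r.
by have := mxrankM_maxl Dl Dl^T; rewrite E mxrank1.
Qed.

Lemma DlT_row (u : 'rV[F]_(n * n)) c : (u *m Dl^T) 0 c = u 0 (gD c).
Proof.
rewrite mxE (bigD1 (gD c)) //= big1.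
  by rewrite !mxE !eqxx mulr1 addr0.
by move=> l /negbTE hl; rewrite !mxE hl mulr0.
Qed.

Lemma gD_neq p q c : ~~ ((lev p == 0%N) && (lev q == 2%N)) ->
  (mxvec_index p q == gD c) = false.
Proof.
move=> h; apply/negP => /eqP/mxvec_index_inj [E1 E2].
by move: h; rewrite E1 E2 lev_b lev_t.
Qed.

Lemma supp_sub (M : 'M[F]_n) :
  (forall p q, ~~ ((lev p == 0%N) && (lev q == 2%N)) -> M p q = 0) ->
  (mxvec M <= Dl)%MS.
Proof.
move=> hM; apply/submxP; exists (mxvec M *m Dl^T).
apply/rowP => l; case/mxvec_indexP: l => p q; rewrite mxvecE mxE.
under eq_bigr do rewrite DlT_row !mxE eqxx /=.
case: (boolP ((lev p == 0%N) && (lev q == 2%N))) => h; last first.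
  by rewrite hM // big1 // => c _; rewrite gD_neq // mulr0.
case: (idxP p) h => [i|j|k]; rewrite ?lev_b ?lev_m ?lev_t //=.
case: (idxP q) => [i'|j'|k']; rewrite ?lev_b ?lev_m ?lev_t //= => _.
rewrite (bigD1 (mxvec_index i k')) //= big1.
  by rewrite /gD prK /= mxvecE eqxx mulr1 addr0.
move=> c hc.
have -> : mxvec_index (bI i) (tI k') = gD (mxvec_index i k') by rewrite /gD prK.
by rewrite (inj_eq gD_inj) eq_sym (negbTE hc) mulr0.
Qed.

Lemma upper (x : 'M[F]_n) : in_gP F r0 r1 r2 x -> (rank_ad F r0 r1 r2 x <= r0 * r2)%N.
Proof.
move=> hx; rewrite /rank_ad -Dl_rank; apply: mxrankS; apply/row_subP => k.
rewrite rowK; apply: supp_sub => p q h; apply: br_zero => //; exact: projP_g.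
Qed.

Lemma projP_delta p q : pprec r0 r1 r2 p q ->
  projP F r0 r1 r2 (delta_mx p q) = delta_mx p q.
Proof.
move=> h; apply/matrixP => p' q'; rewrite !mxE.
case: ifP => // h'; case: eqP => [E1|] //; case: eqP => [E2|] //=.
by move: h'; rewrite E1 E2 h.
Qed.

Lemma ad_row (x : 'M[F]_n) p q : pprec r0 r1 r2 p q ->
  row (mxvec_index p q) (ad_img F r0 r1 r2 x) = mxvec (lie_br F _ x (delta_mx p q)).
Proof. by move=> h; rewrite rowK vec_mx_delta projP_delta. Qed.

Lemma eq_tb k i : (tI k == bI i) = false.
Proof. exact: eq_rlshift. Qed.

Lemma widen_inj m k (h : (m <= k)%N) : injective (widen_ord h).
Proof. by move=> a b /(congr1 val) /= /val_inj. Qed.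

Lemma lower_gen (x : 'M[F]_n) :
  (forall i k, ((delta_mx 0 (mxvec_index (bI i) (tI k)) : 'rV[F]_(n * n)) <= ad_img F r0 r1 r2 x)%MS) ->
  (r0 * r2 <= rank_ad F r0 r1 r2 x)%N.
Proof.
move=> hx; rewrite /rank_ad -Dl_rank; apply: mxrankS; apply/row_subP => c.
by rewrite rowK; case/mxvec_indexP: c => i k; rewrite /gD prK.
Qed.

Lemma caseA (h : (r0 <= r1)%N) : exists x : 'M[F]_n,
  in_gP F r0 r1 r2 x /\ rank_ad F r0 r1 r2 x = (r0 * r2)%N.
Proof.
pose x : 'M[F]_n := \sum_(i < r0) delta_mx (bI i) (mI (widen_ord h i)).
have hx : in_gP F r0 r1 r2 x.
  move=> p q hpq; rewrite summxE big1 // => i _; rewrite mxE.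
  case: eqP => [E1|] //; case: eqP => [E2|] //=.
  by move: hpq; rewrite E1 E2 /pprec lev_b lev_m.
exists x; split => //; apply/eqP; rewrite eqn_leq upper //=.
apply: lower_gen => i k.
have hp : pprec r0 r1 r2 (mI (widen_ord h i)) (tI k) by rewrite /pprec lev_m lev_t.
rewrite -mxvec_delta.
have -> : delta_mx (bI i) (tI k) = lie_br F _ x (delta_mx (mI (widen_ord h i)) (tI k)).
  rewrite /lie_br mulmx_suml mulmx_sumr.
  rewrite [X in _ - X]big1 ?subr0; last first.
    by move=> i' _; rewrite mul_delta_mx_cond eq_tb mulr0n.
  rewrite (bigD1 i) //= mul_delta_mx big1 ?addr0 // => i' hi'.
  by rewrite mul_delta_mx_cond (inj_eq mI_inj) (inj_eq (widen_inj _ _ h)) (negbTE hi') mulr0n.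
by rewrite -ad_row // row_sub.
Qed.

Lemma caseB (h : (r2 <= r1)%N) : exists x : 'M[F]_n,
  in_gP F r0 r1 r2 x /\ rank_ad F r0 r1 r2 x = (r0 * r2)%N.
Proof.
pose x : 'M[F]_n := \sum_(k < r2) delta_mx (mI (widen_ord h k)) (tI k).
have hx : in_gP F r0 r1 r2 x.
  move=> p q hpq; rewrite summxE big1 // => i _; rewrite mxE.
  case: eqP => [E1|] //; case: eqP => [E2|] //=.
  by move: hpq; rewrite E1 E2 /pprec lev_t lev_m.
exists x; split => //; apply/eqP; rewrite eqn_leq upper //=.
apply: lower_gen => i k.
have hp : pprec r0 r1 r2 (bI i) (mI (widen_ord h k)) by rewrite /pprec lev_m lev_b.
rewrite -mxvec_delta.
have -> : delta_mx (bI i) (tI k) = - lie_br F _ x (delta_mx (bI i) (mI (widen_ord h k))).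
  rewrite /lie_br mulmx_suml mulmx_sumr.
  rewrite [X in - (X - _)]big1 ?sub0r ?opprK; last first.
    by move=> i' _; rewrite mul_delta_mx_cond eq_tb mulr0n.
  rewrite (bigD1 k) //= mul_delta_mx big1 ?addr0 // => k' hk'.
  by rewrite mul_delta_mx_cond (inj_eq mI_inj) (inj_eq (widen_inj _ _ h)) eq_sym (negbTE hk') mulr0n.
rewrite linearN /= -ad_row // -scaleN1r.
by apply: scalemx_sub; rewrite row_sub.
Qed.
End S.

Theorem theorem3 (F : closedFieldType) (hF : [pchar F]%R =i pred0)
  (r0 r1 r2 : nat) (h0 : (1 <= r0)%N) (h1 : (1 <= r1)%N) (h2 : (1 <= r2)%N) :
  (r0 <= r1)%N || (r2 <= r1)%N ->
  breadth_is F r0 r1 r2 (r0 * r2)%N.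
Proof.
move=> /orP h; split; last by move=> x; exact: upper.
by case: h => h; [exact: caseA | exact: caseB].
Qed.
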